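(* Let $(T,A,m|_A)$ be a nonsingular open dynamical system and let $\Omega:=A_\infty\setminus K_\infty$. Then $A$ is the disjoint union $A=K_\infty\cup\Omega\cup H_\infty$, and moreover: (a) $T^{-1}\big(\bigcup_{n\ge0}K_n\big)\subseteq\bigcup_{n\ge0}K_n$ modulo $m|_A$-null sets; (b) $T(\Omega)=\Omega$; (c) for each $n\ge 2$, $T$ maps $H_n\setminus K_\infty$ onto $H_{n-1}\setminus K_\infty$, and $T:(H_n\setminus K_\infty)\to(H_{n-1}\setminus K_\infty)$ is nonsingular with respect to the restrictions of $m$ to these sets; (d) $K_\infty=\bigcup_{n=0}^\infty K_n$.
   Context: Let $(X,m)$ be a measure space, $A\subsetneq X$ measurable and $T:A\to X$ measurable such that: $H_0:=T(A)\setminus A$ is measurable; $m(A\cap T^{-1}H_0)>0$; $m(E)>0$ whenever $E\subseteq X$ is measurable with $m(T^{-1}E)>0$; and $T$ is locally finite-to-one (each point of $X$ has finitely many, possibly zero, preimages in $A$). Such $(T,A,m|_A)$ is called a nonsingular open dynamical system. Preimages are taken in $A$: $T^{-1}E=\{y\in A:T(y)\in E\}$, and $T^{-k}\{x\}=\{y\in A: y,T(y),\dots,T^{k-1}(y)\in A,\ T^k(y)=x\}$. Define $A_0=A$, $A_n=\bigcap_{k=0}^nT^{-k}A=\{x:x,T(x),\dots,T^n(x)\in A\}$, $A_\infty=\bigcap_{n\ge0}A_n$, and $H_n=A_{n-1}\setminus A_n$ for $n\ge1$ (so $H_1=A\cap T^{-1}H_0$). Define $K_0=\{x\in A:T^{-1}\{x\}=\emptyset\}$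 and, for $n\ge0$, $K_n=\{x\in A:\min\{k\ge1:T^{-k}\{x\}=\emptyset\}=n+1\}$. Let $K_\infty$ be the set of $x_0\in A$ for which there is no sequence $(x_{-n})_{n\ge1}$ in $A$ with $T(x_{-n})=x_{-(n-1)}$ for all $n\ge1$. Put $H_\infty=\bigcup_{n\ge1}(H_n\setminus K_\infty)$. *)

(* Defs.v *)
From HB Require Import structures.
From mathcomp Require Import all_boot all_order all_algebra.
From mathcomp Require Import all_classical all_reals all_analysis.
Set Implicit Arguments. Unset Strict Implicit. Unset Printing Implicit Defensive.
Import Order.TTheory GRing.Theory Num.Theory.
Local Open Scope classical_set_scope.

(* Open dynamical system: T : X -> X, only its values on A matter. *)
Section OpenDyn.
Context {X : Type} (A : set X) (T : X -> X).

Definition preA (E : set X) : set X := A `&` T @^-1` E.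

Definition An (n : nat) : set X := [set x | forall k, (k <= n)%N -> A (iter k T x)].

Definition Ainf : set X := \bigcap_n An n.

Definition Hn (n : nat) : set X :=
  if n is k.+1 then An k `\` An k.+1 else (T @` A) `\` A.

Definition preimk (k : nat) (x : X) : set X :=
  [set y | (forall j, (j < k)%N -> A (iter j T y)) /\ iter k T y = x].

(* K_n = {x in A : min{k >= 1 : T^{-k}{x} = empty} = n+1} *)
Definition Kn (n : nat) : set X :=
  [set x | A x /\ preimk n.+1 x = set0 /\
           forall k, (1 <= k)%N -> (k <= n)%N -> preimk k x != set0].

Definition Kunion : set X := \bigcup_n Kn n.

Definition Kinf : set X :=
  [set x0 | A x0 /\ ~ exists s : nat -> X,
      s 0%N = x0 /\ forall n, A (s n.+1) /\ T (s n.+1) = s n].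

Definition Hinf : set X := \bigcup_(n in [set n | (1 <= n)%N]) (Hn n `\` Kinf).

Definition Omega : set X := Ainf `\` Kinf.

End OpenDyn.

(* Main.v *)
Require Import Defs.
From HB Require Import structures.
From mathcomp Require Import all_boot all_order all_algebra.
From mathcomp Require Import all_classical all_reals all_analysis.
From mathcomp Require Import zify.
Import Order.TTheory GRing.Theory Num.Theory.
Local Open Scope classical_set_scope.

Section Help.
Variables (X : Type) (A : set X) (T : X -> X).

Definition hasChain (x : X) := exists s : nat -> X,
      s 0%N = x /\ forall n, A (s n.+1) /\ T (s n.+1) = s n.

Lemma KinfE x : Kinf A T x <-> A x /\ ~ hasChain x.
Proof. by []. Qed.

Lemma An0 : An A T 0 = A.
Proof.
apply/seteqP; split => x /=.
  by move=> /(_ 0%N (leqnn 0)).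
by move=> Ax [|k] //.
Qed.

Lemma AnS n x : An A T n.+1 x <-> A x /\ An A T n (T x).
Proof.
split.
  move=> H; split; first exact: (H 0%N).
  by move=> k kn; rewrite -iterSr; apply: H.
move=> [Ax H] [|k] kn //; rewrite iterSr; exact: H.
Qed.

Lemma chain_fwd y : A y -> hasChain y -> hasChain (T y).
Proof.
move=> Ay [s [s0 hs]]; exists (fun n => if n is k.+1 then s k else T y); split => //.
by move=> [|n]; [rewrite s0; split | exact: hs].
Qed.

Lemma chain_bwd x : hasChain x -> exists y, [/\ A y, T y = x & hasChain y].
Proof.
move=> [s [s0 hs]]; exists (s 1%N); have [h1 h2] := hs 0%N; split => //.
  by rewrite h2.
by exists (fun n => s n.+1); split.
Qed.

Lemma chain_iter s : (forall n, A (s n.+1) /\ T (s n.+1) = s n) ->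
  forall j i, iter j T (s (j + i)%N) = s i.
Proof.
move=> hs; elim=> [|j IH] i //=.
by rewrite -iterS iterSr addSn (hs _).2.
Qed.

Lemma chain_preimk x : hasChain x -> forall k, preimk A T k x !=set0.
Proof.
move=> [s [s0 hs]] k; exists (s k); split; last first.
  by rewrite -s0 -(chain_iter _ hs k 0) addn0.
move=> j jk; have -> : k = (j + (k - j.+1).+1)%N by lia.
by rewrite chain_iter //; exact: (hs _).1.
Qed.

Lemma preimk_mono k l x : (k <= l)%N -> preimk A T k x = set0 -> preimk A T l x = set0.
Proof.
move=> kl h0; apply/seteqP; split => // y [hy ey].
have : preimk A T k x (iter (l - k) T y).
  split.
    move=> j jk; rewrite -iterD; apply: hy; lia.
  by rewrite -iterD subnKC.
by rewrite h0.
Qed.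

End Help.
Arguments hasChain {X}.
Arguments AnS {X A T n x}.
Arguments chain_bwd {X A T x}.
Arguments chain_fwd {X A T y}.
Arguments chain_preimk {X A T x}.
Arguments preimk_mono {X A T k l x}.

Lemma seq_bound (X : eqType) (s : seq X) (P : X -> nat -> Prop) :
  (forall y, y \in s -> exists k, P y k) ->
  (forall y k l, (k <= l)%N -> P y k -> P y l) ->
  exists K, forall y, y \in s -> P y K.
Proof.
move=> hP mono; elim: s hP => [|a s IH] hP; first by exists 0%N.
have [ka Pa] := hP a (mem_head _ _).
have [Ks Ps] := IH (fun y ys => hP y (@mem_behead _ (a :: s) _ ys)).
exists (maxn ka Ks) => y; rewrite in_cons => /orP[/eqP->|ys].
  exact: mono (leq_maxl _ _) Pa.
exact: mono (leq_maxr _ _) (Ps _ ys).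
Qed.

Lemma konig (X : eqType) (A : set X) (T : X -> X) x :
  finite_set (A `&` T @^-1` [set x]) -> (forall k, preimk A T k x !=set0) ->
  exists y, [/\ A y, T y = x & forall k, preimk A T k y !=set0].
Proof.
move=> /finite_seqP[s hs] hall; apply: contrapT => hno.
have [K HK] : exists K, forall y, y \in s -> preimk A T K y = set0.
  apply: seq_bound; last by move=> y k l kl; exact: preimk_mono.
  move=> y ys; have : (A `&` T @^-1` [set x]) y by rewrite hs.
  move=> [Ay Tyx]; apply: contrapT => hk; apply: hno; exists y; split => // k.
  apply/set0P/eqP => e; apply: hk; by exists k.
have [z [hz ez]] := hall K.+1.
have ys : iter K T z \in s.
  have : (A `&` T @^-1` [set x]) (iter K T z).
    by split; [exact: hz | rewrite /= -iterS].
  by rewrite hs.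
have : preimk A T K (iter K T z) z by split => // j jK; apply: hz; lia.
by rewrite HK.
Qed.

Lemma allpre_chain (X : eqType) (A : set X) (T : X -> X) x :
  (forall x, finite_set (A `&` T @^-1` [set x])) ->
  (forall k, preimk A T k x !=set0) -> hasChain A T x.
Proof.
move=> fin hx.
have [g hg] := @choice X X (fun t u => (forall k, preimk A T k t !=set0) ->
   [/\ A u, T u = t & forall k, preimk A T k u !=set0]) (fun t =>
   match pselect (forall k, preimk A T k t !=set0) with
   | left h => let: ex_intro y hy := @konig X A T t (fin t) h in ex_intro _ y (fun _ => hy)
   | right h => ex_intro _ t (fun h' => False_ind _ (h h'))
   end).
have hall : forall n, forall k, preimk A T k (iter n g x) !=set0.
  by elim=> [|n IH] //=; have [] := hg _ IH.
exists (fun n => iter n g x); split => // n /=.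
by have [] := hg _ (hall n).
Qed.

Lemma Kinf_Kunion (X : eqType) (A : set X) (T : X -> X) :
  (forall x, finite_set (A `&` T @^-1` [set x])) ->
  Kinf A T = Kunion A T.
Proof.
move=> fin; apply/seteqP; split => x.
  move=> [Ax nch].
  have hex : exists k, `[< preimk A T k x = set0 >].
    apply: contrapT => hn; apply: nch; apply: allpre_chain => // k.
    apply/set0P/eqP => e; apply: hn; exists k; exact/asboolP.
  case: (ex_minnP hex) => m /asboolP hm hmin.
  have m0 : m != 0%N.
    apply/eqP => m0; move: hm; rewrite m0 => e.
    have : preimk A T 0 x x by split.
    by rewrite e.
  exists m.-1 => //; split => //; split.
    by rewrite prednK // lt0n.
  move=> k k1 kn; apply/eqP => e.
  have := hmin k (asboolT e); lia.
move=> [n _ [Ax [e _]]]; split => // ch.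
have := chain_preimk ch n.+1; rewrite e => -[z].
done.
Qed.

Local Open Scope ring_scope.
Local Open Scope ereal_scope.

Theorem lemma1 (d : measure_display) (X : measurableType d) (R : realType)
  (m : {measure set X -> \bar R}) (A : set X) (T : X -> X)
  (mA : measurable A) (AnX : A != [set: X])
  (mT : measurable_fun A T)
  (mH0 : measurable (Hn A T 0))
  (posH1 : 0 < m (A `&` T @^-1` Hn A T 0))
  (nonsing : forall E, measurable E -> 0 < m (A `&` T @^-1` E) -> 0 < m E)
  (finpre : forall x, finite_set (A `&` T @^-1` [set x])) :
  [/\ A = Kinf A T `|` Omega A T `|` Hinf A T
      /\ [/\ Kinf A T `&` Omega A T = set0, Kinf A T `&` Hinf A T = set0
           & Omega A T `&` Hinf A T = set0],
    (* (a) *)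
    m.-negligible (preA A T (Kunion A T) `\` Kunion A T),
    (* (b) *)
    T @` Omega A T = Omega A T,
    (* (c) *)
    (forall n, (2 <= n)%N ->
       T @` (Hn A T n `\` Kinf A T) = Hn A T n.-1 `\` Kinf A T /\
       forall E, measurable E ->
         m.-negligible ((Hn A T n.-1 `\` Kinf A T) `&` E) ->
         m.-negligible ((Hn A T n `\` Kinf A T) `&` preA A T E))
  & (* (d) *)
    Kinf A T = Kunion A T].
Proof.
have hd := @Kinf_Kunion X A T finpre.
have An_sub : forall k x, An A T k x -> A x by move=> k x /(_ 0%N (leq0n _)).
have nK : forall x, A x -> ~ Kinf A T x -> hasChain A T x.
  by move=> x Ax nk; apply: contrapT => nc; apply: nk.
have Kbwd : forall y, A y -> Kinf A T (T y) -> Kinf A T y.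
  move=> y Ay [ATy nc]; split => // c; apply: nc; exact: chain_fwd.
split.
- split.
  + apply/seteqP; split => x.
      move=> Ax; case: (pselect (Kinf A T x)) => hk; first by left; left.
      case: (pselect (Ainf A T x)) => ha; first by left; right.
      right.
      have hex : exists n, `[< ~ An A T n x >].
        apply: contrapT => hn; apply: ha => n _; apply: contrapT => h.
        by apply: hn; exists n; exact/asboolP.
      case: (ex_minnP hex) => n /asboolP hn hmin.
      case: n hn hmin => [|n] hn hmin; first by exfalso; apply: hn; rewrite An0.
      exists n.+1 => //; split => //; split => //.
      apply: contrapT => h; have := hmin n (asboolT h); lia.
    move=> [[[]//|[/(_ 0%N I) + _]]|[[|n] /= n1 [[+ _] _]]] //.
    + by rewrite An0.
    + exact: An_sub.
  + split.
    * by rewrite -subset0 => x [kx [_ nk]].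
    * by rewrite -subset0 => x [kx [n _ [_ nk]]].
    * rewrite -subset0 => x [[ax _] [[|n] /= n1 [[_ nan] _]]] //.
      by apply: nan; apply: ax.
- rewrite -hd; apply: (negligibleS _ (negligible_set0 _)).
  by move=> y [[Ay KTy] nKy]; apply: nKy; apply: Kbwd.
- apply/seteqP; split => y.
    move=> [x [ax nkx] <-]; have Ax : A x by apply: An_sub (ax 0%N I).
    split.
      move=> n _; have /AnS[_ //] : An A T n.+1 x by exact: ax.
    move=> [ATx nc]; apply: nc; apply: chain_fwd => //; exact: nK.
  move=> [ay nky]; have Ay : A y by apply: An_sub (ay 0%N I).
  have [x [Ax Txy cx]] := chain_bwd (nK _ Ay nky).
  exists x => //; split.
    move=> [|n] _; first by rewrite An0.
    apply/AnS; split => //; rewrite Txy; exact: ay.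
  by move=> [_ nc].
- move=> [|[|j]] // _ /=.
  have fwd : forall x, (An A T j.+1 `\` An A T j.+2 `\` Kinf A T) x ->
      (An A T j `\` An A T j.+1 `\` Kinf A T) (T x).
    move=> x [[ax nax] nkx]; have Ax : A x by exact: An_sub ax.
    split; first split.
    + by have /AnS[] := ax.
    + by move=> h; apply: nax; apply/AnS.
    + move=> [_ nc]; apply: nc; apply: chain_fwd => //; exact: nK.
  split.
    apply/seteqP; split => y; first by move=> [x hx <-]; exact: fwd.
    move=> [[ay nay] nky].
    have Ay : A y by exact: An_sub ay.
    have [x [Ax Txy cx]] := chain_bwd (nK _ Ay nky).
    exists x => //; split; first split.
    + by apply/AnS; rewrite Txy.
    + by move=> /AnS[_]; rewrite Txy.
    + by move=> [_ nc].
  move=> E mE [N [mN N0 sub]].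
  exists (A `&` T @^-1` N); split.
  + exact: mT.
  + apply/eqP; rewrite eq_le measure_ge0 andbT leNgt; apply/negP => /nonsing.
    by move=> /(_ mN); rewrite N0 ltxx.
  + move=> x [hx [Ax TE]]; split => //; apply: sub; split => //; exact: fwd.
- exact: hd.
Qed.
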